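(* Let $F,G$ be two plane forests with $n$ vertices. Then $F\leq G$ if and only if $G$ is obtained from $F$ by a finite number of transformations, where a transformation of a plane forest at a vertex $s$ which is not a leaf is the following operation: let $c$ be the rightmost child of $s$; remove the edge from $s$ to $c$ (so that $c$ keeps its own subtree); if $s$ has a parent $p$, make $c$ a child of $p$ placed immediately to the right of $s$ among the children of $p$; if $s$ is a root, make $c$ a root placed immediately to the right of the tree of $s$. All other parts of the forest are unchanged.
   Context: A plane poset is a finite set with two partial orders $\leq_h,\leq_r$ such that two distinct elements are $\leq_h$-comparable iff they are not $\leq_r$-comparable, considered up to isomorphism. A plane forest is a plane poset which does not contain, as a plane subposet (subset with restricted orders), the plane poset $\{a,b,c\}$ with $a<_r b$, $a<_h c$, $b<_h c$. Equivalently, a plane forest is a finite rooted forest (roots at the bottom) in which the roots are linearly ordered from left to right and the children of each vertex are linearly ordered from left to right; $x\leq_h y$ iff $x$ is an ancestor of $y$ (or $x=y$), and for $\leq_h$-incomparable $x,y$, $x<_r y$ iff $x$ lies to the left of $y$. On a plane poset, $x\leq y$ iff ($x\leq_h y$ or $x\leq_r y$) is a total order (known fact). For plane posets $P,Q$ of the same cardinality, $\theta_{P,Q}$ is the increasing bijection $P\to Q$ for these total orders, and $P\leq Q$ means: for all $x,y\in P$, $\theta_{P,Q}(x)\leq_h\theta_{P,Q}(y)$ in $Q$ implies $x\leq_h y$ in $P$. *)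

(* Defs.v *)
From mathcomp Require Import all_boot.
From Stdlib Require Export Relations.Relation_Operators.
Set Implicit Arguments. Unset Strict Implicit. Unset Printing Implicit Defensive.

(* A plane tree: a root with a left-to-right ordered list of subtrees.
   A plane forest: a left-to-right ordered list of plane trees. *)
Inductive ptree := PNode of seq ptree.
Definition pforest := seq ptree.

Definition children (t : ptree) : pforest := let: PNode cs := t in cs.

(* Vertices are addressed by their path of child indices: the address
   [:: i0; i1; ...; ik] is the vertex reached from the i0-th root by taking
   the i1-th child, ..., the ik-th child (indices from 0, left to right).
   tverts t lists the addresses of the vertices of t relative to its root
   (the root is [::]). *)
Fixpoint tverts (t : ptree) : seq (seq nat) :=
  let: PNode cs := t in
  [::] :: (fix aux (k : nat) (f : seq ptree) : seq (seq nat) :=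
             match f with
             | [::] => [::]
             | c :: f' => map (cons k) (tverts c) ++ aux k.+1 f'
             end) 0 cs.

Fixpoint fverts_from (k : nat) (f : pforest) : seq (seq nat) :=
  match f with
  | [::] => [::]
  | t :: f' => map (cons k) (tverts t) ++ fverts_from k.+1 f'
  end.

Definition fverts (f : pforest) : seq (seq nat) := fverts_from 0 f.

Definition nverts (f : pforest) : nat := size (fverts f).

(* x <=_h y : x is an ancestor of y or x = y. *)
Definition hle (x y : seq nat) : bool := prefix x y.

(* x <_r y : x and y are <=_h-incomparable and x lies to the left of y. *)
Fixpoint rlt (x y : seq nat) : bool :=
  match x, y with
  | i :: x', j :: y' => (i < j) || ((i == j) && rlt x' y')
  | _, _ => false
  end.

Definition rle (x y : seq nat) : bool := (x == y) || rlt x y.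

Definition tle (x y : seq nat) : bool := hle x y || rle x y.
Definition tlt (x y : seq nat) : bool := tle x y && (x != y).

(* Rank of a vertex for the total order: number of vertices strictly below.
   The increasing bijection theta_{F,G} maps the vertex of rank r of F to the
   vertex of rank r of G. *)
Definition rank (f : pforest) (x : seq nat) : nat :=
  count (fun z => tlt z x) (fverts f).

Definition forest_le (F G : pforest) : Prop :=
  forall x y x' y' : seq nat,
    x \in fverts F -> y \in fverts F ->
    x' \in fverts G -> y' \in fverts G ->
    rank G x' = rank F x -> rank G y' = rank F y ->
    hle x' y' -> hle x y.

(* Split the tree t at its rightmost root-child c: returns [:: t'; c] where t'
   is t with the subtree c removed (if t is a leaf, returns [:: t]). *)
Definition split_last (t : ptree) : seq ptree :=
  match rev (children t) with
  | [::] => [:: t]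
  | c :: rcs => [:: PNode (rev rcs); c]
  end.

Fixpoint transf (f : pforest) (s : seq nat) : pforest :=
  match s with
  | [::] => f
  | [:: i] => take i f ++ split_last (nth (PNode [::]) f i) ++ drop i.+1 f
  | i :: s' =>
      take i f ++ [:: PNode (transf (children (nth (PNode [::]) f i)) s')]
               ++ drop i.+1 f
  end.

(* One transformation step at a vertex s of F which is not a leaf. *)
Definition transf_step (F G : pforest) : Prop :=
  exists s : seq nat,
    s \in fverts F /\ rcons s 0 \in fverts F /\ G = transf F s.

(* Main.v *)
Require Import Defs.
From mathcomp Require Import all_boot.
From mathcomp Require Import zify.
From Stdlib Require Import Relations.Relation_Operators.
Set Implicit Arguments. Unset Strict Implicit. Unset Printing Implicit Defensive.

Fixpoint szt (t : ptree) : seq nat :=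
  let: PNode cs := t in
  let l := flatten (map szt cs) in (size l).+1 :: l.
Definition szf (f : pforest) : seq nat := flatten (map szt f).

Lemma szf_cons cs F : szf (PNode cs :: F) = (size (szf cs)).+1 :: szf cs ++ szf F.
Proof. by []. Qed.
Lemma szf_cat F G : szf (F ++ G) = szf F ++ szf G.
Proof. by rewrite /szf map_cat flatten_cat. Qed.

Lemma forest_ind' (P : pforest -> Prop) :
  P [::] -> (forall cs F, P cs -> P F -> P (PNode cs :: F)) -> forall F, P F.
Proof.
move=> H0 HS F.
suff: forall N F, size (szf F) < N -> P F by apply; apply: ltnSn.
elim=> [|N IH] [|[cs] F'] // Hs; apply: HS; apply: IH;
  move: Hs; rewrite szf_cons /= size_cat; lia.
Qed.

Lemma tverts_eq cs : tverts (PNode cs) = [::] :: fverts_from 0 cs.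
Proof. rewrite /=; congr (_ :: _); move: 0; elim: cs => //=. Qed.

Lemma fv_cons k cs F : fverts_from k (PNode cs :: F) =
  [:: k] :: map (cons k) (fverts_from 0 cs) ++ fverts_from k.+1 F.
Proof. by []. Qed.

Lemma size_fv F k : size (fverts_from k F) = size (szf F).
Proof.
elim/forest_ind': F k => // cs F IH1 IH2 k.
by rewrite fv_cons szf_cons /= !size_cat size_map IH1 IH2.
Qed.

Lemma fv_head F k x : x \in fverts_from k F -> exists h x', x = h :: x' /\ k <= h /\ h < k + size F.
Proof.
elim/forest_ind': F k x => // cs F IH1 IH2 k x.
rewrite fv_cons inE => /orP[/eqP->|]; first by exists k, [::]; split=> //=; lia.
rewrite mem_cat => /orP[/mapP[y _ ->]|/IH2 [h [x' [-> [? ?]]]]].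
  exists k, y; split => //=. lia.
exists h, x'; split=> //=. lia.
Qed.

Lemma fv_nonnil F k x : x \in fverts_from k F -> x != [::].
Proof. by case/fv_head=> h [x' [-> _]]. Qed.

Lemma sz_pos F i : i < size (szf F) -> 0 < nth 0 (szf F) i.
Proof.
elim/forest_ind': F i => // cs F IH1 IH2; rewrite szf_cons => -[|i] //=.
rewrite size_cat nth_cat => Hi.
case: ifP => H; [exact: IH1| apply: IH2; lia].
Qed.

Lemma sz_bound F i : i < size (szf F) -> i + nth 0 (szf F) i <= size (szf F).
Proof.
elim/forest_ind': F i => // cs F IH1 IH2; rewrite szf_cons => -[|i] /=; rewrite size_cat; first lia.
rewrite nth_cat => Hi.
case: ifP => H; [have := IH1 _ H; lia| have := IH2 (i - size (szf cs)); lia].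
Qed.

Lemma tlt_same k a b : tlt (k :: a) (k :: b) = tlt a b.
Proof. by rewrite /tlt /tle /hle /rle prefix_cons /= ltnn eqxx /= eqseq_cons eqxx. Qed.
Lemma tlt_lt k h a b : k < h -> tlt (k :: a) (h :: b).
Proof. by move=> H; rewrite /tlt /tle /rle /= H !orbT /= eqseq_cons (ltn_eqF H). Qed.
Lemma tlt_gt k h a b : h < k -> tlt (k :: a) (h :: b) = false.
Proof.
move=> H; rewrite /tlt /tle /hle /rle prefix_cons /= eqseq_cons.
by rewrite (gtn_eqF H) ltnNge (ltnW H).
Qed.
Lemma tlt_nil_l w : tlt [::] w = (w != [::]).
Proof. by case: w. Qed.
Lemma tlt_nil_r w : tlt w [::] = false.
Proof. by case: w => //= a w; rewrite /tlt /tle /hle /rle /=. Qed.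
Lemma hle_same k a b : hle (k :: a) (k :: b) = hle a b.
Proof. by rewrite /hle prefix_cons eqxx. Qed.
Lemma hle_ne k h a b : k != h -> hle (k :: a) (h :: b) = false.
Proof. by rewrite /hle prefix_cons => /negbTE->. Qed.

Lemma count0 (T : eqType) (p : pred T) s : (forall z, z \in s -> p z = false) -> count p s = 0.
Proof. by move=> H; rewrite (eq_in_count (a2 := pred0)) ?count_pred0. Qed.
Lemma countT (T : eqType) (p : pred T) s : (forall z, z \in s -> p z = true) -> count p s = size s.
Proof. by move=> H; rewrite (eq_in_count (a2 := predT)) ?count_predT. Qed.

Lemma nth_fv_cons k cs F i :
  nth [::] (fverts_from k (PNode cs :: F)) i =
  if i == 0 then [:: k] else if i <= size (szf cs) then k :: nth [::] (fverts_from 0 cs) i.-1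
  else nth [::] (fverts_from k.+1 F) (i - (size (szf cs)).+1).
Proof.
rewrite fv_cons; case: i => //= i; rewrite nth_cat size_map size_fv.
case: ifP => H; first by rewrite (nth_map [::]) ?size_fv.
by rewrite subSS.
Qed.

Lemma nth_sz_cons cs F i :
  nth 0 (szf (PNode cs :: F)) i =
  if i == 0 then (size (szf cs)).+1 else if i <= size (szf cs) then nth 0 (szf cs) i.-1
  else nth 0 (szf F) (i - (size (szf cs)).+1).
Proof.
rewrite szf_cons; case: i => //= i; rewrite nth_cat.
by case: ifP => H; rewrite ?subSS.
Qed.

Lemma rank_nth F k i : i < size (szf F) ->
  count (fun z => tlt z (nth [::] (fverts_from k F) i)) (fverts_from k F) = i.
Proof.
elim/forest_ind': F k i => // cs F IH1 IH2 k i.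
rewrite nth_fv_cons szf_cons fv_cons /= size_cat => Hi.
rewrite count_cat count_map.
case: ifP => [/eqP->|Hi0].
  rewrite tlt_same tlt_nil_r count0 ?count0 //.
    by move=> z /fv_head [h [x' [-> [Hh _]]]]; rewrite tlt_gt.
  by move=> z _ /=; rewrite tlt_same tlt_nil_r.
case: ifP => Hia.
  rewrite tlt_same tlt_nil_l.
  have Hm : nth [::] (fverts_from 0 cs) i.-1 \in fverts_from 0 cs by rewrite mem_nth // size_fv; lia.
  rewrite (fv_nonnil Hm) /= (eq_count (a2 := fun z => tlt z (nth [::] (fverts_from 0 cs) i.-1))); last by move=> z /=; rewrite tlt_same.
  rewrite IH1; last lia.
  rewrite count0; first lia.
  move=> z /fv_head [h [x' [-> [Hh _]]]]; rewrite tlt_gt //.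
have Hm : nth [::] (fverts_from k.+1 F) (i - (size (szf cs)).+1) \in fverts_from k.+1 F by rewrite mem_nth // size_fv; lia.
case/fv_head: (Hm) => h [x' [Hx [Hh _]]]; rewrite Hx tlt_lt // countT; last by move=> z _ /=; rewrite tlt_lt.
rewrite -Hx IH2; last lia.
rewrite size_fv; lia.
Qed.

Lemma hle_nth F k i j : i < size (szf F) -> j < size (szf F) ->
  hle (nth [::] (fverts_from k F) i) (nth [::] (fverts_from k F) j) =
  (i <= j) && (j < i + nth 0 (szf F) i).
Proof.
elim/forest_ind': F k i j => // cs F IH1 IH2 k i j.
rewrite !nth_fv_cons nth_sz_cons szf_cons /= size_cat => Hi Hj.
have HW l : l < size (szf cs) -> nth [::] (fverts_from 0 cs) l \in fverts_from 0 cs.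
  by move=> ?; rewrite mem_nth // size_fv.
have HU l : l < size (szf F) -> nth [::] (fverts_from k.+1 F) l \in fverts_from k.+1 F.
  by move=> ?; rewrite mem_nth // size_fv.
have [->|Hi0] := eqVneq i 0; have [->|Hj0] := eqVneq j 0;
  rewrite ?eqxx ?(negbTE Hi0) ?(negbTE Hj0).
- by rewrite /hle prefix_refl.
- rewrite add0n; case: ifP => Hja.
    by rewrite hle_same /hle prefix0s; apply/esym; lia.
  case/fv_head: (HU (j - (size (szf cs)).+1) ltac:(lia)) => h [x' [-> [Hh _]]].
  rewrite hle_ne; [apply/esym/negbTE; lia| lia].
- case: ifP => Hia.
    rewrite hle_same /hle prefixs0.
    rewrite (negbTE (fv_nonnil (HW i.-1 ltac:(lia)))).
    apply/esym/negbTE; lia.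
  case/fv_head: (HU (i - (size (szf cs)).+1) ltac:(lia)) => h [x' [-> [Hh _]]].
  rewrite hle_ne; [apply/esym/negbTE; lia| lia].
- case: ifP => Hia; case: ifP => Hja.
  + rewrite hle_same IH1; [|lia|lia].
    apply/idP/idP; lia.
  + case/fv_head: (HU (j - (size (szf cs)).+1) ltac:(lia)) => h [x' [-> [Hh _]]].
    rewrite hle_ne; last lia.
    have := @sz_bound cs i.-1 ltac:(lia). move=> ?; apply/esym/negbTE; lia.
  + case/fv_head: (HU (i - (size (szf cs)).+1) ltac:(lia)) => h [x' [-> [Hh _]]].
    rewrite hle_ne; [apply/esym/negbTE; lia|lia].
  + rewrite IH2; [|lia|lia]. apply/idP/idP; lia.
Qed.

Lemma next_child F k i : i < size (szf F) -> 1 < nth 0 (szf F) i ->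
  rcons (nth [::] (fverts_from k F) i) 0 = nth [::] (fverts_from k F) i.+1.
Proof.
elim/forest_ind': F k i => // cs F IH1 IH2 k i.
rewrite !nth_fv_cons nth_sz_cons szf_cons /= size_cat => Hi.
have [->|Hi0] := eqVneq i 0; rewrite ?eqxx ?(negbTE Hi0) /=.
  case: cs IH1 IH2 Hi => [|[cs'] cs] IH1 IH2 Hi //= _.
case: ifP => Hia Hsz.
  have Hs := @sz_bound cs i.-1 ltac:(lia).
  have -> : i < size (szf cs) by lia.
  rewrite rcons_cons IH1; [|lia|lia].
  by rewrite prednK //; lia.
have -> : (i < size (szf cs)) = false by lia.
rewrite IH2; [|lia|lia].
by rewrite subSn //; lia.
Qed.

Lemma szf_inj F G : szf F = szf G -> F = G.
Proof.
elim/forest_ind': F G => [|cs F IH1 IH2] [|[ds] G] //.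
rewrite !szf_cons => -[Hs]; move/eqP; rewrite eqseq_cat // => /andP[/eqP /IH1 -> /eqP /IH2 ->] //.
Qed.

Lemma fv_cat k A B : fverts_from k (A ++ B) = fverts_from k A ++ fverts_from (k + size A) B.
Proof. by elim: A k => [|a A IH] k /=; rewrite ?addn0 // IH catA addSnnS. Qed.

Lemma set_nth_catr (T : Type) (x0 : T) A B v y :
  set_nth x0 (A ++ B) (size A + v) y = A ++ set_nth x0 B v y.
Proof. by elim: A => //= a A ->. Qed.

Lemma set_nth_catl (T : Type) (x0 : T) A B v y : v < size A ->
  set_nth x0 (A ++ B) v y = set_nth x0 A v y ++ B.
Proof. by elim: A v => //= a A IH [|v] //= H; rewrite IH. Qed.

Lemma nth_catr (T : Type) (x0 : T) A B v : nth x0 (A ++ B) (size A + v) = nth x0 B v.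
Proof. by rewrite nth_cat ltnNge leq_addr /= addKn. Qed.

Lemma mem_fv_split F i s' : (i :: s') \in fverts_from 0 F ->
  i < size F /\ s' \in tverts (nth (PNode [::]) F i).
Proof.
move=> H; have Hi : i < size F by case/fv_head: H => h [x' [[-> _] [_ ?]]].
split=> //.
move: H; rewrite -{1}(cat_take_drop i F) (drop_nth (PNode [::])) // fv_cat /= !mem_cat size_takel ?(ltnW Hi) // add0n.
case/orP=> [/fv_head [h [x' [[Eh _] [_]]]]|]; first by rewrite -Eh add0n size_takel ?ltnn //; apply: ltnW.
case/orP=> [/mapP [y Hy [->]] //|/fv_head [h [x' [[-> _] []]]]]; by rewrite ltnn.
Qed.

Lemma nth_head (T : Type) (x0 : T) A x L : nth x0 (A ++ x :: L) (size A) = x.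
Proof. by rewrite -[size A]addn0 nth_catr. Qed.
Lemma nth_inner (T : Type) (x0 : T) A x L B v : v < size L ->
  nth x0 (A ++ x :: L ++ B) (size A + v.+1) = nth x0 L v.
Proof. by move=> H; rewrite nth_catr /= nth_cat H. Qed.
Lemma set_head (T : Type) (x0 : T) A x L y : set_nth x0 (A ++ x :: L) (size A) y = A ++ y :: L.
Proof. by rewrite -[size A]addn0 set_nth_catr. Qed.
Lemma set_inner (T : Type) (x0 : T) A x L B v y : v < size L ->
  set_nth x0 (A ++ x :: L ++ B) (size A + v.+1) y = A ++ x :: set_nth x0 L v y ++ B.
Proof. by move=> H; rewrite set_nth_catr /= set_nth_catl. Qed.
Lemma take_head (T : Type) (A B : seq T) : take (size A) (A ++ B) = A.
Proof. by rewrite take_size_cat. Qed.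
Lemma drop_head (T : Type) (A : seq T) x B : drop (size A).+1 (A ++ x :: B) = B.
Proof. by elim: A => [|a A IH] /=; rewrite ?drop0. Qed.

Lemma transf_sz s F : s \in fverts_from 0 F -> rcons s 0 \in fverts_from 0 F ->
 exists v m, [/\ v < size (szf F), nth [::] (fverts_from 0 F) v = s, 0 < m &
   (m < nth 0 (szf F) v /\ nth 0 (szf F) (v + nth 0 (szf F) v - m) = m /\
   szf (transf F s) = set_nth 0 (szf F) v (nth 0 (szf F) v - m))].
Proof.
elim: s F => [|i s' IH] F; first by move/fv_nonnil.
move=> Hs Hr.
case: (mem_fv_split Hs) => Hi Hs'.
have Hr' : rcons s' 0 \in tverts (nth (PNode [::]) F i) := (mem_fv_split Hr).2.
have E : F = take i F ++ nth (PNode [::]) F i :: drop i.+1 F by rewrite -drop_nth // cat_take_drop.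
move: Hs Hr Hs' Hr'; rewrite E.
have HA : size (take i F) = i by rewrite size_takel // ltnW.
move: (take i F) (drop i.+1 F) (nth (PNode [::]) F i) HA => A B [cs] HA.
clear E Hi; subst i => _ _.
rewrite nth_head tverts_eq !inE => Hs' Hr'.
rewrite fv_cat add0n fv_cons szf_cat szf_cons.
have HvA : size (fverts_from 0 A) = size (szf A) by rewrite size_fv.
case: s' IH Hs' Hr' => [|j s''] IH Hs' Hr'.
-
  case/lastP: cs Hs' Hr' => [|cs' c] Hs' Hr'; first by [].
  have Ecs : szf (rcons cs' c) = szf cs' ++ szt c by rewrite -cats1 szf_cat /szf /= cats0.
  have Hm : 0 < size (szt c) by case: c {Ecs Hr' Hs'}.
  have Hc : nth 0 (szt c ++ szf B) 0 = size (szt c) by case: c {Ecs Hr' Hm Hs'}.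
  exists (size (szf A)), (size (szt c)).
  rewrite nth_head Ecs !size_cat; split; last (split; last split).
  + rewrite /=; lia.
  + by rewrite -HvA nth_head.
  + by [].
  + lia.
  + have -> : size (szf A) + (size (szf cs') + size (szt c)).+1 - size (szt c) =
              size (szf A) + (size (szf cs')).+1 by lia.
    by rewrite nth_catr /= -catA -[size (szf cs')]addn0 nth_catr Hc.
  + rewrite set_head.
    rewrite /transf take_head nth_head drop_head /split_last /= rev_rcons revK.
    rewrite !szf_cat szf_cons /szf /= cats0 -!catA /=.
    congr (_ ++ _ :: _); lia.
-
  have Hs1 : j :: s'' \in fverts_from 0 cs by case/orP: Hs'.
  have Hr1 : rcons (j :: s'') 0 \in fverts_from 0 cs by case/orP: Hr'.
  case: (IH cs Hs1 Hr1) => v [m [Hv Hnth Hm0 [Hm [Hc Hsz]]]].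
  have Hb := @sz_bound cs v Hv.
  exists (size (szf A) + v.+1), m.
  rewrite nth_inner //; split; last (split; last split).
  + by rewrite size_cat /= size_cat; lia.
  + rewrite -HvA nth_catr /= nth_cat size_map size_fv Hv (nth_map [::]) ?size_fv //.
    by rewrite Hnth.
  + by [].
  + by [].
  + have -> : size (szf A) + v.+1 + nth 0 (szf cs) v - m = size (szf A) + (v + nth 0 (szf cs) v - m).+1 by lia.
    rewrite nth_inner //; lia.
  + rewrite set_inner //.
    have -> : transf (A ++ PNode cs :: B) [:: size A, j & s''] =
              A ++ PNode (transf cs (j :: s'')) :: B.
      by rewrite /= take_head nth_head drop_head.
    rewrite szf_cat szf_cons Hsz size_set_nth.
    congr (_ ++ _.+1 :: _); lia.
Qed.

Lemma laminar F i j : i < size (szf F) -> j < size (szf F) -> i < j ->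
  j < i + nth 0 (szf F) i -> j + nth 0 (szf F) j <= i + nth 0 (szf F) i.
Proof.
move=> Hi Hj Hij Hji.
have Hb := @sz_bound F j Hj; have Hp := @sz_pos F j Hj.
have H1 : hle (nth [::] (fverts_from 0 F) i) (nth [::] (fverts_from 0 F) j).
  by rewrite hle_nth //; apply/andP; split => //; exact: ltnW.
have H2 : hle (nth [::] (fverts_from 0 F) j) (nth [::] (fverts_from 0 F) (j + nth 0 (szf F) j).-1).
  rewrite hle_nth //; [apply/andP; split; lia | lia].
have := prefix_trans H1 H2; rewrite -/(hle _ _) hle_nth //; last lia.
case/andP => _; lia.
Qed.

Lemma sumn_set_nth l v y : v < size l -> sumn (set_nth 0 l v y) + nth 0 l v = sumn l + y.
Proof. elim: l v => //= a l IH [|v] /= H; [lia| have := IH v H; lia]. Qed.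

Lemma le_iff F G : size (szf F) = size (szf G) ->
  forest_le F G <-> (forall i, i < size (szf F) -> nth 0 (szf G) i <= nth 0 (szf F) i).
Proof.
move=> Hn; split.
- move=> H i Hi.
  have HiG : i < size (szf G) by rewrite -Hn.
  have Hb := @sz_bound G i HiG; have Hp := @sz_pos G i HiG.
  set j := (i + nth 0 (szf G) i).-1.
  have Hj : j < size (szf F) by rewrite /j; lia.
  have HjG : j < size (szf G) by rewrite -Hn.
  have := H (nth [::] (fverts F) i) (nth [::] (fverts F) j)
            (nth [::] (fverts G) i) (nth [::] (fverts G) j).
  rewrite /fverts /rank !rank_nth // !mem_nth ?size_fv // hle_nth // hle_nth //.
  have -> : (i <= j < i + nth 0 (szf G) i) by rewrite /j; apply/andP; split; lia.
  by move/(_ isT isT isT isT erefl erefl isT)/andP => [_]; rewrite /j; lia.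
- move=> H x y x' y'.
  rewrite /fverts /rank.
  case/(nthP [::]) => i Hi <-; case/(nthP [::]) => j Hj <-.
  case/(nthP [::]) => i' Hi' <-; case/(nthP [::]) => j' Hj' <-.
  rewrite !size_fv in Hi Hj Hi' Hj'.
  rewrite /fverts !rank_nth // => -> ->.
  rewrite !hle_nth // -?Hn //.
  have := H i Hi; move=> Hle /andP [Hij Hj2]; apply/andP; split => //; lia.
Qed.

Definition ple F G := size (szf F) = size (szf G) /\ forall i, nth 0 (szf G) i <= nth 0 (szf F) i.

Lemma step_ple F G : transf_step F G -> ple F G.
Proof.
case=> s [Hs [Hr ->]].
case: (transf_sz Hs Hr) => v [m [Hv _ Hm0 [Hm [_ Hsz]]]].
rewrite /ple Hsz size_set_nth; split; first by apply/esym/maxn_idPr.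
by move=> i; rewrite nth_set_nth /=; case: ifP => // /eqP->; rewrite leq_subr.
Qed.

Lemma rt_ple F G : clos_refl_trans pforest transf_step F G -> ple F G.
Proof.
elim=> [x y /step_ple //| x | x y z _ [H1 H2] _ [H3 H4]]; first by split.
by split; [rewrite H1| move=> i; apply: leq_trans (H4 i) (H2 i)].
Qed.

Lemma reach N F G : sumn (szf F) < N -> size (szf F) = size (szf G) ->
  (forall i, i < size (szf F) -> nth 0 (szf G) i <= nth 0 (szf F) i) ->
  clos_refl_trans pforest transf_step F G.
Proof.
elim: N F => // N IH F HN Hn Hle.
have [E|NE] := eqVneq (szf F) (szf G); first by rewrite (szf_inj E); apply: rt_refl.
set n := size (szf F).
pose P i := (i < n) && (nth 0 (szf G) i < nth 0 (szf F) i).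
have exP : exists i, P i.
  case: (boolP (has P (iota 0 n))) => [/hasP [i _ Pi]|/hasPn nP]; first by exists i.
  case/negP: NE; apply/eqP.
  apply: (@eq_from_nth _ 0) => // i Hi.
  have := nP i; rewrite mem_iota /= add0n Hi => /(_ isT).
  rewrite /P Hi /= -leqNgt => H1.
  by apply/eqP; rewrite eqn_leq H1 Hle.
have ubP : forall i, P i -> i <= n by move=> i /andP [/ltnW].
case: (ex_maxnP exP ubP) => v /andP [Hv Hlt] Hmax.
have HvG : v < size (szf G) by rewrite -Hn.
have HpG := @sz_pos G v HvG.
have Hb := @sz_bound F v Hv.
set s := nth [::] (fverts_from 0 F) v.
have Hs : s \in fverts_from 0 F by rewrite mem_nth // size_fv.
have Hr : rcons s 0 \in fverts_from 0 F.
  by rewrite /s next_child //; [rewrite mem_nth // size_fv; lia | lia].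
case: (transf_sz Hs Hr) => v' [m [Hv' Hnth Hm0 [Hm [Hc Hsz]]]].
have Ev : v' = v.
  have := rank_nth 0 Hv'; rewrite Hnth /s rank_nth //.
subst v'.
set c := v + nth 0 (szf F) v - m.
have Hc1 : v < c by rewrite /c; lia.
have Hc2 : c < n by rewrite /c /n; lia.
have HcG : m <= nth 0 (szf G) c.
  have : ~~ P c by apply/negP => /Hmax; lia.
  by rewrite /P Hc2 /= -leqNgt Hc.
have HvG' : nth 0 (szf G) v <= nth 0 (szf F) v - m.
  case: (ltnP c (v + nth 0 (szf G) v)) => H; last by rewrite /c in H; lia.
  have := @laminar G v c HvG ltac:(lia) Hc1 H; rewrite /c in HcG *; lia.
apply: (@rt_trans _ _ _ (transf F s)); first by apply: rt_step; exists s.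
apply: IH.
- have := sumn_set_nth (nth 0 (szf F) v - m) Hv; rewrite -Hsz; lia.
- by rewrite Hsz size_set_nth -Hn; apply/maxn_idPr.
- move=> i; rewrite Hsz size_set_nth nth_set_nth /= => Hi.
  case: ifP => [/eqP -> //| _]; apply: Hle.
  by move: Hi; rewrite (maxn_idPr Hv).
Qed.

Theorem proposition20 (n : nat) (F G : pforest) :
  nverts F = n -> nverts G = n ->
  (forest_le F G <-> clos_refl_trans pforest transf_step F G).
Proof.
rewrite /nverts /fverts !size_fv => HF HG.
have Hn : size (szf F) = size (szf G) by rewrite HF HG.
rewrite le_iff //; split.
- by move=> H; apply: (@reach (sumn (szf F)).+1).
- by move/rt_ple => [_ H] i _.
Qed.
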